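(* Let $n,k,\delta$ be positive integers with $k<n$ and $(n-k)\mid\delta$, and set $M=\max\{n-k,k\}$ and $L=\lfloor \delta/k\rfloor+\delta/(n-k)$. Let $\mathbb{F}$ be a finite field of characteristic $p$ and let $\alpha$ be a primitive element of $\mathbb{F}$. For $\ell=0,1,\dots,L$ let $T_\ell\in\mathbb{F}^{M\times M}$ be the matrix whose $(i,j)$ entry ($1\le i,j\le M$) is $$(T_\ell)_{ij}=\alpha^{2^{M\ell+(i-1)+(j-1)}},$$ and let $\mathcal{T}(T_0,\dots,T_L)\in\mathbb{F}^{(L+1)M\times(L+1)M}$ be the lower block triangular block Toeplitz matrix $$\mathcal{T}(T_0,\dots,T_L)=\begin{pmatrix} T_0 & 0 & \cdots & 0\\ T_1 & T_0 & \cdots & 0\\ \vdots & \vdots & \ddots & \vdots\\ T_L & T_{L-1} & \cdots & T_0\end{pmatrix}.$$ If $|\mathbb{F}|\ge p^{\left(2^{M(L+2)-1}\right)}$, then $\mathcal{T}(T_0,\dots,T_L)$ is superregular over $\mathbb{F}$.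
   Context: For a square matrix $A=[\mu_{ij}]$ of order $m$, $|A|=\sum_{\sigma\in S_m}(-1)^{\mathrm{sgn}(\sigma)}\mu_{1\sigma(1)}\cdots\mu_{m\sigma(m)}$; a term $\mu_{1\sigma(1)}\cdots\mu_{m\sigma(m)}$ is called trivial if $\mu_{i\sigma(i)}=0$ for some $i$. If $A$ is a square submatrix of a matrix $B$ and all terms of the determinant of $A$ are trivial, then $|A|$ is called a trivial minor of $B$. A matrix $B$ is called superregular if all its non-trivial minors are nonzero. *)

(* Defs.v *)
From mathcomp Require Import all_boot all_order all_algebra all_fingroup.
Set Implicit Arguments. Unset Strict Implicit. Unset Printing Implicit Defensive.
Import GRing.Theory.
Local Open Scope ring_scope.

Definition submx_of (R : Type) (m n r : nat) (f : 'I_r -> 'I_m) (g : 'I_r -> 'I_n)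
  (B : 'M[R]_(m, n)) : 'M[R]_r := \matrix_(i < r, j < r) B (f i) (g j).

(* the minor |A| is non-trivial iff some term of the Leibniz expansion has
   no zero factor *)
Definition nontrivial_minor (R : nzRingType) (r : nat) (A : 'M[R]_r) : Prop :=
  exists s : 'S_r, forall i : 'I_r, A i (s i) != 0.

Definition superregular (R : nzRingType) (m n : nat) (B : 'M[R]_(m, n)) : Prop :=
  forall (r : nat) (f : 'I_r -> 'I_m) (g : 'I_r -> 'I_n),
    (forall i j : 'I_r, (i < j)%N -> (f i < f j)%N) ->
    (forall i j : 'I_r, (i < j)%N -> (g i < g j)%N) ->
    nontrivial_minor (submx_of f g B) -> \det (submx_of f g B) != 0.

Definition primitive_element (F : finFieldType) (a : F) : bool :=
  (#|F|.-1).-primitive_root a.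

(* (T_l)_(i,j) with 0-indexed i, j < M:  alpha ^ (2 ^ (M l + i + j)) *)
Definition Tentry (F : fieldType) (alpha : F) (M l i j : nat) : F :=
  alpha ^+ (2 ^ (M * l + i + j)).

Definition Tblock (F : fieldType) (alpha : F) (M l : nat) : 'M[F]_M :=
  \matrix_(i < M, j < M) Tentry alpha M l i j.

(* lower block triangular block Toeplitz matrix T(T_0,...,T_L), (L+1) x (L+1)
   blocks of size M x M; (0-indexed) block (a, b) is T_(a-b) if b <= a, else 0.
   Global index i corresponds to block i %/ M, position i %% M inside the block. *)
Definition block_toeplitz (F : fieldType) (alpha : F) (M L : nat) :
  'M[F]_((L.+1) * M) :=
  \matrix_(i < (L.+1) * M, j < (L.+1) * M)
    if (j %/ M <= i %/ M)%N
    then Tentry alpha M (i %/ M - j %/ M) (i %% M) (j %% M)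
    else 0.

(* Main.v *)
Require Import Defs.
From mathcomp Require Import all_boot all_order all_algebra all_fingroup.
From mathcomp Require Import finfield zify.
Import GRing.Theory.

Section Core.
Variables (r : nat) (x w : 'I_r -> nat) (valid : 'I_r -> 'I_r -> bool).
Hypothesis xinc : forall a b : 'I_r, (a < b)%N -> (x a < x b)%N.
Hypothesis winj : injective w.
Hypothesis vmono : forall a b c : 'I_r, (a <= b)%N -> valid a c -> valid b c.

Definition Vs (s : 'S_r) := [forall i, valid i (s i)].
Definition Eg (s : 'S_r) := (\sum_i 2 ^ (x i + w (s i)))%N.
Definition Pp (s : 'S_r) := forall a b : 'I_r, (a < b)%N -> (w (s b) < w (s a))%N -> ~~ valid a (s b).

Lemma sum2 (h : 'I_r -> nat) (a b : 'I_r) : a != b ->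
  (\sum_i h i = h a + h b + \sum_(i | (i != a) && (i != b)) h i)%N.
Proof.
move=> ab; rewrite (bigD1 a) //= (bigD1 b) /=; last by rewrite eq_sym.
by rewrite addnA.
Qed.

Lemma max_Pp s : Vs s -> (forall t, Vs t -> (Eg t <= Eg s)%N) -> Pp s.
Proof.
move=> Vss mx a b ab wl; apply/negP => vab.
have anb : a != b by rewrite neq_ltn ab.
pose t := (tperm a b * s)%g.
have ta : t a = s b by rewrite permM tpermL.
have tb : t b = s a by rewrite permM tpermR.
have to i : i != a -> i != b -> t i = s i.
  by move=> ia ib; rewrite permM tpermD // eq_sym.
have Vt : Vs t.
  apply/forallP => i.
  have [->|ia] := eqVneq i a; first by rewrite ta.
  have [->|ib] := eqVneq i b; first by rewrite tb; apply: (vmono a b _ (ltnW ab)); move/forallP: Vss.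
  by rewrite to //; move/forallP: Vss.
have := mx t Vt; rewrite /Eg (sum2 _ _ _ anb) (sum2 (fun i => 2 ^ (x i + w (s i)))%N _ _ anb) ta tb.
rewrite (eq_bigr (fun i => 2 ^ (x i + w (s i)))%N); last first.
  by move=> i /andP[ia ib]; rewrite to.
rewrite !expnD.
have xab := xinc a b ab.
have h1 : (2 ^ x a < 2 ^ x b)%N by rewrite ltn_exp2l.
have h2 : (2 ^ w (s b) < 2 ^ w (s a))%N by rewrite ltn_exp2l.
move: h1 h2; set A := 2 ^ x a; set B := 2 ^ x b; set C := 2 ^ w (s b); set D := 2 ^ w (s a).
set S := \sum_(_ | _) _.
move=> h1 h2; nia.
Qed.

Lemma Pp_half (s1 s2 : 'S_r) (a : 'I_r) :
  (forall b : 'I_r, (b < a)%N -> s1 b = s2 b) -> s1 a != s2 a ->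
  (w (s1 a) < w (s2 a))%N -> Vs s1 -> Pp s2 -> False.
Proof.
move=> lt neq wl V1 P2.
pose b := (s2^-1)%g (s1 a).
have sb : s2 b = s1 a by rewrite permKV.
have ba : b != a by apply/eqP => e; move: neq; rewrite -sb e eqxx.
have ab : (a < b)%N.
  case: (ltngtP a b) => // [h|h]; last by move: ba; rewrite (val_inj h) eqxx.
  have := lt b h; rewrite sb => /perm_inj e; by move: ba; rewrite e eqxx.
have := P2 a b ab; rewrite sb => /(_ wl); move/forallP: V1 => V1; by rewrite V1.
Qed.

Lemma Pp_unique s1 s2 : Vs s1 -> Vs s2 -> Pp s1 -> Pp s2 -> s1 = s2.
Proof.
move=> V1 V2 P1 P2; apply/permP => i; apply/eqP; apply/negPn/negP => ne.
case: (arg_minnP (fun a : 'I_r => nat_of_ord a) (P := fun a => s1 a != s2 a) ne) => a na amin.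
have lt (b : 'I_r) : (b < a)%N -> s1 b = s2 b.
  by move=> ba; apply/eqP; apply/negPn/negP => nb; have := amin b nb; rewrite leqNgt ba.
have wn : w (s1 a) != w (s2 a) by apply: contra na => /eqP /winj ->.
case: (ltngtP (w (s1 a)) (w (s2 a))) wn => // h _.
  exact: (Pp_half s1 s2 a lt na h V1 P2).
apply: (@Pp_half s2 s1 a) => //; first by move=> b /lt ->.
by rewrite eq_sym.
Qed.

Lemma max_unique s1 s2 : Vs s1 -> Vs s2 ->
  (forall t, Vs t -> (Eg t <= Eg s1)%N) -> (forall t, Vs t -> (Eg t <= Eg s2)%N) -> s1 = s2.
Proof. by move=> V1 V2 m1 m2; apply: Pp_unique => //; apply: max_Pp. Qed.
End Core.
Lemma sum_pow2_lt N : (\sum_(k < N) 2 ^ k < 2 ^ N)%N.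
Proof.
elim: N => [|N IH]; first by rewrite big_ord0.
by rewrite big_ord_recr /= expnS mul2n -addnn ltn_add2r.
Qed.

Lemma sum_inj_le r N (f : 'I_r -> 'I_N) (h : nat -> nat) : injective f ->
  (\sum_i h (f i) <= \sum_(k < N) h k)%N.
Proof.
move=> fi.
rewrite -(big_imset (fun k : 'I_N => h k) (A := predT)); last by move=> a b _ _ /fi.
rewrite [X in (_ <= X)%N](bigID (mem [set f x | x in predT])) /=.
exact: leq_addr.
Qed.

Lemma winj_aux M L j1 j2 : (0 < M)%N -> (j1 < L.+1 * M)%N -> (j2 < L.+1 * M)%N ->
  (j1 %% M + M * (L - j1 %/ M) = j2 %% M + M * (L - j2 %/ M))%N -> j1 = j2.
Proof.
move=> M0 h1 h2 e.
have q1 : (j1 %/ M <= L)%N by rewrite -ltnS ltn_divLR.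
have q2 : (j2 %/ M <= L)%N by rewrite -ltnS ltn_divLR.
have em : (j1 %% M = j2 %% M)%N.
  have := congr1 (modn^~ M) e.
  by rewrite ![(_ %% M + _)%N]addnC ![(M * _)%N]mulnC !modnMDl !modn_mod.
have ed : (L - j1 %/ M = L - j2 %/ M)%N.
  have := congr1 (divn^~ M) e.
  by rewrite ![(_ %% M + _)%N]addnC ![(M * _)%N]mulnC !divnMDl // (divn_small (ltn_pmod j1 M0)) (divn_small (ltn_pmod j2 M0)) !addn0.
rewrite (divn_eq j1 M) (divn_eq j2 M) em; congr (_ * _ + _)%N; lia.
Qed.
Section CB.
Local Open Scope ring_scope.
Lemma count_bound (F : finFieldType) (p : nat) (alpha : F) (P : {poly int}) :
  p \in [pchar F] -> (#|F|.-1).-primitive_root alpha ->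
  lead_coef P \is a GRing.unit -> (map_poly intr P).[alpha] = 0 ->
  (#|F| <= p ^ (size P).-1)%N.
Proof.
move=> pchar prim lu Pa.
set D := (size P).-1.
have pP : prime p by apply: pcharf_prime pchar.
have p0 : (0 < p)%N by apply: prime_gt0.
have Pn0 : P != 0.
  by apply/eqP=> P0; move: lu; rewrite P0 lead_coef0 unitr0.
pose Phi (c : {ffun 'I_D -> 'I_p}) : F := \sum_(i < D) (c i)%:R * alpha ^+ i.
have claim : forall q : {poly int}, (size q <= D)%N ->
    (map_poly intr q).[alpha] \in codom Phi.
  move=> q sq.
  have sm : (size (map_poly (intr : int -> F) q) <= D)%N.
    exact: leq_trans (size_poly _ _) sq.
  rewrite (horner_coef_wide _ sm).
  have lt i : (`|(q`_i %% p)%Z|%N < p)%N.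
    have h1 : (0 <= (q`_i %% p)%Z) by apply: modz_ge0; rewrite eqz_nat -lt0n.
    have h2 : ((q`_i %% p)%Z < p) by apply: ltz_pmod; rewrite ltz_nat.
    by rewrite -ltz_nat gez0_abs.
  apply/codomP; exists [ffun i : 'I_D => Ordinal (lt i)].
  rewrite /Phi; apply: eq_bigr => i _; rewrite ffunE /= coef_map /=.
  congr (_ * _).
  rewrite {1}(divz_eq q`_i p) rmorphD rmorphM /= -[(p%:Z)%:~R]/(p%:R : F).
  rewrite (pcharf0 pchar) mulr0 add0r.
  have h1 : (0 <= (q`_i %% p)%Z) by apply: modz_ge0; rewrite eqz_nat -lt0n.
  by rewrite -{1}(gez0_abs h1).
have all : forall y : F, y \in codom Phi.
  move=> y; have [->|yn0] := eqVneq y 0.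
    by have := claim 0; rewrite rmorph0 horner0; apply; rewrite size_poly0.
  have cF : (0 < #|F|)%N by apply/card_gt0P; exists 0.
  have yn : y ^+ (#|F|.-1) = 1.
    apply: (mulfI yn0); rewrite mulr1 -exprS prednK //; exact: expf_card.
  have [i ->] := prim_rootP prim yn.
  have e := Pdiv.IdomainUnit.divp_eq lu ('X^i).
  have sr : (size ('X^i %% P)%R <= D)%N.
    by rewrite /D -ltnS prednK ?size_poly_gt0 // ltn_modp.
  have := claim _ sr.
  have -> : ('X^i %% P = 'X^i - ('X^i %/ P) * P)%R by rewrite {2}e addrC addKr.
  by rewrite rmorphB rmorphM /= hornerD hornerN hornerM Pa mulr0 subr0 map_polyXn hornerXn.
apply: leq_trans (subset_leq_card (_ : [pred y : F | true] \subset codom Phi)) _.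
  by apply/subsetP=> y _; exact: all.
by rewrite (leq_trans (card_size _)) // size_codom card_ffun !card_ord.
Qed.
Lemma map_sum_eval (I : finType) (Pd : pred I) (c : I -> int) (m : I -> nat)
  (F : fieldType) (a : F) :
  (map_poly intr (\sum_(i | Pd i) c i *: 'X^(m i))).[a] = \sum_(i | Pd i) (c i)%:~R * a ^+ m i.
Proof.
rewrite (big_morph (fun q : {poly int} => (map_poly (intr : int -> F) q).[a]) (id1 := 0) (op1 := +%R)).
- by apply: eq_bigr => i _; rewrite map_polyZ hornerZ map_polyXn hornerXn.
- by move=> x y; rewrite rmorphD hornerD.
- by rewrite rmorph0 horner0.
Qed.
End CB.


Theorem theorem3p2 (n k delta : nat) (F : finFieldType) (p : nat) (alpha : F) :
  (0 < n)%N -> (0 < k)%N -> (0 < delta)%N -> (k < n)%N -> ((n - k) %| delta)%N ->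
  p \in [pchar F]%R ->
  primitive_element alpha ->
  let M := maxn (n - k) k in
  let L := (delta %/ k + delta %/ (n - k))%N in
  (p ^ (2 ^ (M * (L + 2) - 1)) <= #|F|)%N ->
  superregular (block_toeplitz alpha M L).
Proof.
Local Open Scope ring_scope.
move=> n0 k0 d0 kn dv pc prim M L hF r f g finc ginc [s0 hs0].
have M0 : (0 < M)%N by rewrite /M leq_max k0 orbT.
clearbody M L.
set B := block_toeplitz alpha M L.
set A := submx_of f g B.
pose valid (a c : 'I_r) := (g c %/ M <= f a %/ M)%N.
pose e (a c : 'I_r) := (M * (f a %/ M - g c %/ M) + f a %% M + g c %% M)%N.
have Aij a c : A a c = if valid a c then (alpha ^+ (2 ^ e a c)%N)%R else 0%R.
  by rewrite /A /submx_of /B /block_toeplitz !mxE /Tentry.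
pose Ea (s : 'S_r) := (\sum_i 2 ^ e i (s i))%N.
have det_eq : \det A = (\sum_(s | Vs r valid s) (-1) ^+ s * alpha ^+ (Ea s))%R.
  rewrite /determinant (bigID (Vs r valid)) /= [X in (_ + X)%R]big1 ?addr0.
    apply: eq_bigr => s Vss; congr (_ * _)%R.
    rewrite /Ea -prodrXr; apply: eq_bigr => i _; rewrite Aij.
    by move/forallP: Vss => /(_ i) ->.
  move=> s nV; have [i ni] : exists i, ~~ valid i (s i) by apply/forallPn.
  by rewrite (bigD1 i) //= Aij (negbTE ni) mul0r mulr0.
have V0 : Vs r valid s0.
  apply/forallP => i; have := hs0 i; rewrite Aij; case: ifP => // _; by rewrite eqxx.
pose sm := [arg max_(s > s0 | Vs r valid s) Ea s].
have [Vm maxm] : Vs r valid sm /\ forall s, Vs r valid s -> (Ea s <= Ea sm)%N.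
  by rewrite /sm; case: arg_maxnP => // s Vs1 H; split.
pose x (a : 'I_r) := nat_of_ord (f a).
pose w (c : 'I_r) := (g c %% M + M * (L - g c %/ M))%N.
have xw a c : valid a c -> (2 ^ (x a + w c) = 2 ^ e a c * 2 ^ (M * L))%N.
  move=> v; rewrite -expnD; congr (2 ^ _)%N.
  have gl : (g c %/ M <= L)%N by rewrite -ltnS ltn_divLR.
  have := divn_eq (f a) M; rewrite /x /w /e.
  move: v gl; rewrite /valid; set q1 := (f a %/ M)%N; set q2 := (g c %/ M)%N.
  set r1 := (f a %% M)%N; set r2 := (g c %% M)%N; move=> v gl ef.
  have h1 : (M * q2 <= M * q1)%N by rewrite leq_mul2l v orbT.
  have h2 : (M * q2 <= M * L)%N by rewrite leq_mul2l gl orbT.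
  rewrite ef (mulnC q1 M) !mulnBr; clear -h1 h2; lia.
have EgE s : Vs r valid s -> Eg r x w s = (Ea s * 2 ^ (M * L))%N.
  move=> /forallP V; rewrite /Eg /Ea big_distrl; apply: eq_bigr => i _; exact: xw.
have ginj : injective g.
  move=> c1 c2 h; apply/val_inj; case: (ltngtP c1 c2) => // h'.
    by have := ginc _ _ h'; rewrite h ltnn.
  by have := ginc _ _ h'; rewrite h ltnn.
have finj : injective f.
  move=> c1 c2 h; apply/val_inj; case: (ltngtP c1 c2) => // h'.
    by have := finc _ _ h'; rewrite h ltnn.
  by have := finc _ _ h'; rewrite h ltnn.
have winj : injective w.
  move=> c1 c2 h; apply: ginj; apply/val_inj.
  exact: (winj_aux _ _ _ _ M0 (ltn_ord (g c1)) (ltn_ord (g c2)) h).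
have vmono (a b c : 'I_r) : (a <= b)%N -> valid a c -> valid b c.
  move=> ab v; apply: (leq_trans v); apply: leq_div2r.
  case: (ltngtP a b) ab => // [h|h] _; first exact: ltnW (finc _ _ h).
  by rewrite (val_inj h).
have huniq s : Vs r valid s -> Ea s = Ea sm -> s = sm.
  move=> V e'; apply: (max_unique r x w valid finc winj vmono) => // t Vt.
    by rewrite !EgE // leq_mul2r e' maxm ?orbT.
  by rewrite !EgE // leq_mul2r maxm ?orbT.
pose P : {poly int} := (\sum_(s | Vs r valid s) ((-1) ^+ s) *: 'X^(Ea s))%R.
set D := Ea sm.
have cP m : (P`_m = \sum_(s | Vs r valid s && (Ea s == m)) (-1) ^+ s)%R by rewrite coef_sumMXn.
have cD : (P`_D = (-1) ^+ sm)%R.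
  rewrite cP (big_pred1 sm) // => s1 /=.
  apply/andP/eqP => [[VV /eqP]|->]; [exact: huniq s1 VV | by rewrite Vm eqxx].
have sP : size P = D.+1.
  apply/eqP; rewrite eqn_leq; apply/andP; split.
    apply/leq_sizeP => j Dj; rewrite cP big_pred0 // => s.
    apply/negbTE/andP => [[VV /eqP ej]]; have := maxm s VV; rewrite ej /D; lia.
  rewrite ltnNge; apply/negP => h; move: (nth_default 0%R h); rewrite cD => /eqP.
  by rewrite signr_eq0.
have lu : lead_coef P \is a GRing.unit by rewrite lead_coefE sP /= cD unitrX ?unitrN1.
have ev : (map_poly intr P).[alpha] = \det A.
  rewrite det_eq map_sum_eval; apply: eq_bigr => s _; by rewrite rmorph_sign.
apply/eqP => dA; rewrite dA in ev.
have hc := count_bound _ _ _ _ pc prim lu ev.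
rewrite sP /= in hc.
have e_le a c : valid a c -> (e a c <= f a + (M - 1))%N.
  move=> v; have := divn_eq (f a) M; have := ltn_pmod (g c) M0; rewrite /e.
  move: v; rewrite /valid; set q1 := (f a %/ M)%N; set q2 := (g c %/ M)%N.
  set r1 := (f a %% M)%N; set r2 := (g c %% M)%N; move=> v lr ef.
  have h1 : (M * q2 <= M * q1)%N by rewrite leq_mul2l v orbT.
  rewrite ef (mulnC q1 M) !mulnBr; clear -h1 lr; lia.
have Dlt : (D < 2 ^ (M * (L + 2) - 1))%N.
  apply: (@leq_trans (\sum_i 2 ^ (f i + (M - 1))).+1)%N.
    rewrite ltnS /D /Ea; apply: leq_sum => i _; apply: leq_pexp2l => //.
    by apply: e_le; move/forallP: Vm.
  have ex : (M * (L + 2) - 1 = L.+1 * M + (M - 1))%N.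
    by clear -M0; nia.
  rewrite ex expnD.
  apply: (@leq_trans (\sum_(k < L.+1 * M) 2 ^ (k + (M - 1))).+1)%N.
    by rewrite ltnS; exact: (sum_inj_le _ _ f (fun k => 2 ^ (k + (M - 1)))%N finj).
  rewrite (eq_bigr (fun kk : 'I_(L.+1 * M) => 2 ^ kk * 2 ^ (M - 1))%N); last by move=> kk _; rewrite expnD.
  rewrite -big_distrl /= ltn_pmul2r ?expn_gt0 //.
  exact: sum_pow2_lt.
have p1 : (1 < p)%N by apply: prime_gt1; apply: pcharf_prime pc.
have := ltn_exp2l D (2 ^ (M * (L + 2) - 1)) p1; rewrite Dlt => hh.
have := leq_trans hh hF; rewrite ltnNge => /negP; apply.
exact: hc.
Qed.
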